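(* Let $P,Q\in W^{(l)}\setminus\{0\}$. Then: (1) $w(PQ)=w(P)+w(Q)$ and $\overline w(PQ)=\overline w(P)+\overline w(Q)$; in particular $PQ\neq0$. (2) $\ell_{\rho,\sigma}(PQ)=\ell_{\rho,\sigma}(P)\ell_{\rho,\sigma}(Q)$ for all $(\rho,\sigma)\in\mathfrak V$. (3) $v_{\rho,\sigma}(PQ)=v_{\rho,\sigma}(P)+v_{\rho,\sigma}(Q)$ for all $(\rho,\sigma)\in\overline{\mathfrak V}$. (4) $\mathrm{st}_{\rho,\sigma}(PQ)=\mathrm{st}_{\rho,\sigma}(P)+\mathrm{st}_{\rho,\sigma}(Q)$ for all $(\rho,\sigma)\in\mathfrak V$. (5) $\mathrm{en}_{\rho,\sigma}(PQ)=\mathrm{en}_{\rho,\sigma}(P)+\mathrm{en}_{\rho,\sigma}(Q)$ for all $(\rho,\sigma)\in\mathfrak V$. The same properties hold for $P,Q\in L^{(l)}\setminus\{0\}$.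
   Context: $K$ is a field of characteristic zero, $l\in\mathbb{N}$. $W^{(l)}$ is the associative $K$-algebra with $K$-basis $\{X^{i/l}Y^j:i\in\mathbb{Z},j\in\mathbb{N}_0\}$, powers of $X$ multiplying as Laurent monomials and $[Y,X^\alpha]=\alpha X^{\alpha-1}$ for $\alpha\in\frac1l\mathbb{Z}$. $L^{(l)}=K[x^{1/l},x^{-1/l},y]$ (commutative), $\Psi^{(l)}(X^{i/l}Y^j)=x^{i/l}y^j$ ($K$-linear). Supports are sets of exponents with nonzero coefficients (for $W^{(l)}$, via $\Psi^{(l)}$). $\overline{\mathfrak V}=\{(\rho,\sigma)\in\mathbb{Z}^2:\gcd(\rho,\sigma)=1,\rho+\sigma\ge0\}$, $\mathfrak V$ its subset with $\rho+\sigma>0$. For $P\ne0$, $v_{\rho,\sigma}(P)=\max\{\rho a+\sigma b:(a,b)\in\mathrm{Supp}(P)\}$ and $\ell_{\rho,\sigma}(P)$ is the sum of the terms (of $\Psi^{(l)}(P)$) whose exponent attains this maximum. $w(P)$: among the points $(a,b)\in\mathrm{Supp}(P)$ maximizing $a-b$, the one with largest $a$; $\overline w(P)$: among those maximizing $b-a$, the one with largest $b$. $\mathrm{st}_{\rho,\sigma}(P):=w(\ell_{\rho,\sigma}(P))$, $\mathrm{en}_{\rho,\sigma}(P):=\overline w(\ell_{\rho,\sigma}(P))$. *)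

(* Defs.v *)
From HB Require Import structures.
From mathcomp Require Import all_boot all_order all_algebra.
From mathcomp Require Import finmap.
Set Implicit Arguments. Unset Strict Implicit. Unset Printing Implicit Defensive.
Import Order.TTheory GRing.Theory Num.Theory.
Local Open Scope ring_scope.


(* An element of W^(l) (resp. L^(l)) is a finite K-linear combination of basis
   monomials X^{i/l} Y^j (resp. x^{i/l} y^j); we encode the monomial with
   exponent (i/l, j) by the index pair (i, j) : int * nat, and an element by its
   finitely supported coefficient function.  Psi^(l) is then the identity on
   coefficient functions, so both algebras share this carrier and differ only
   in their multiplication. *)
Definition lpoly (K : fieldType) := {fsfun (int * nat) -> K with 0}.

Definition Supp (K : fieldType) (P : lpoly K) : {fset int * nat} := finsupp P.

Definition expo (l : nat) (p : int * nat) : rat * rat :=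
  ((p.1)%:~R / (l%:R), (p.2)%:R).

Definition ffact (K : fieldType) (a : K) (k : nat) : K :=
  \prod_(i < k) (a - i%:R).

(* Product in W^(l): normal ordering via
   (X^a Y^j)(X^b Y^m) = sum_k C(j,k) b(b-1)..(b-k+1) X^{a+b-k} Y^{j-k+m},
   which follows from [Y, X^b] = b X^{b-1}. *)
Definition mulW_key (l : nat) (p q : int * nat) (k : nat) : int * nat :=
  ((p.1 + q.1 - (k * l)%:Z)%R, (p.2 - k + q.2)%N).

Definition mulW (K : fieldType) (l : nat) (P Q : lpoly K) : lpoly K :=
  let S := [seq mulW_key l pq.1 pq.2 k
             | pq <- [seq (p, q) | p <- Supp P, q <- Supp Q],
               k <- iota 0 pq.1.2.+1] in
  [fsfun x in [fset y | y in S]%fset =>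
     \sum_(p <- Supp P) \sum_(q <- Supp Q) \sum_(k < p.2.+1)
        (if x == mulW_key l p q k then
           P p * Q q * ('C(p.2, k))%:R * ffact ((q.1)%:~R / (l%:R)) k
         else 0)].

Definition mulL_key (p q : int * nat) : int * nat :=
  ((p.1 + q.1)%R, (p.2 + q.2)%N).

Definition mulL (K : fieldType) (P Q : lpoly K) : lpoly K :=
  let S := [seq mulL_key p q | p <- Supp P, q <- Supp Q] in
  [fsfun x in [fset y | y in S]%fset =>
     \sum_(p <- Supp P) \sum_(q <- Supp Q)
        (if x == mulL_key p q then P p * Q q else 0)].

Definition padd (p q : int * nat) : int * nat := ((p.1 + q.1)%R, (p.2 + q.2)%N).

Definition wt (rho sigma : int) (l : nat) (p : int * nat) : rat :=
  rho%:~R * (expo l p).1 + sigma%:~R * (expo l p).2.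

Definition vrs (K : fieldType) (rho sigma : int) (l : nat) (P : lpoly K) : rat :=
  let s := Supp P in
  foldr (fun p m => Num.max (wt rho sigma l p) m)
        (wt rho sigma l (head (0%R, 0%N) s)) s.

Definition ell (K : fieldType) (rho sigma : int) (l : nat) (P : lpoly K) : lpoly K :=
  [fsfun x in Supp P =>
     if wt rho sigma l x == vrs rho sigma l P then P x else 0].

Definition lexlt (x y : rat * rat) : bool :=
  (x.1 < y.1) || ((x.1 == y.1) && (x.2 < y.2)).

Definition lexmax (key : int * nat -> rat * rat) (s : seq (int * nat))
    (x0 : int * nat) : int * nat :=
  foldr (fun p q => if lexlt (key q) (key p) then p else q) (head x0 s) s.

Definition w (K : fieldType) (l : nat) (P : lpoly K) : int * nat :=
  lexmax (fun p => ((expo l p).1 - (expo l p).2, (expo l p).1))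
         (Supp P) (0%R, 0%N).

Definition wbar (K : fieldType) (l : nat) (P : lpoly K) : int * nat :=
  lexmax (fun p => ((expo l p).2 - (expo l p).1, (expo l p).2))
         (Supp P) (0%R, 0%N).

Definition st (K : fieldType) (rho sigma : int) (l : nat) (P : lpoly K) :=
  w l (ell rho sigma l P).
Definition en (K : fieldType) (rho sigma : int) (l : nat) (P : lpoly K) :=
  wbar l (ell rho sigma l P).

Definition inVbar (rho sigma : int) : bool :=
  (gcdz rho sigma == 1%N) && (0 <= rho + sigma)%R.
Definition inV (rho sigma : int) : bool :=
  (gcdz rho sigma == 1%N) && (0 < rho + sigma)%R.

(* Main.v *)
Require Import Defs.
From HB Require Import structures.
From mathcomp Require Import all_boot all_order all_algebra.
From mathcomp Require Import finmap.
From mathcomp Require Import ring lra.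
Import Order.TTheory GRing.Theory Num.Theory.
Local Open Scope ring_scope.
Set Implicit Arguments. Unset Strict Implicit. Unset Printing Implicit Defensive.
Section A.
Variable K : fieldType.
Implicit Types P Q : lpoly K.

Lemma suppE P x : (x \in Supp P) = (P x != 0).
Proof. by rewrite /Supp mem_finsupp. Qed.

Lemma suppN P x : x \notin Supp P -> P x = 0.
Proof. by rewrite suppE negbK => /eqP. Qed.

Lemma ellE rho sigma l P x :
  ell rho sigma l P x = if wt rho sigma l x == vrs rho sigma l P then P x else 0.
Proof.
rewrite /ell fsfun_fun; case: ifP => // /negbT /suppN ->; by case: ifP.
Qed.
End A.

Definition lexle (x y : rat * rat) : bool :=
  (x.1 < y.1) || ((x.1 == y.1) && (x.2 <= y.2)).
Definition addp (x y : rat * rat) : rat * rat := (x.1 + y.1, x.2 + y.2).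

Lemma lexltNle x y : lexlt x y = ~~ lexle y x.
Proof.
case: x y => [x1 x2] [y1 y2]; rewrite /lexlt /lexle /=.
case: (ltgtP x1 y1) => /=.
- by [].
- by [].
- by move=> _; rewrite ltNge.
Qed.

Lemma lexle_refl x : lexle x x.
Proof. by rewrite /lexle eqxx lexx orbT. Qed.

Lemma lexlt_le x y : lexlt x y -> lexle x y.
Proof. by rewrite /lexlt /lexle => /orP[->//|/andP[-> /ltW ->]]; rewrite orbT. Qed.

Lemma lexle_trans y x z : lexle x y -> lexle y z -> lexle x z.
Proof.
case: x y z => [x1 x2] [y1 y2] [z1 z2]; rewrite /lexle /=.
case/orP=> [h|/andP[/eqP-> h]]; case/orP=> [h'|/andP[/eqP<- h']].
- by rewrite (lt_trans h h').
- by rewrite h.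
- by rewrite h'.
- by rewrite eqxx (le_trans h h') orbT.
Qed.

Lemma lexlt_le_trans y x z : lexlt x y -> lexle y z -> lexlt x z.
Proof.
rewrite !lexltNle => h1 h2; apply/negP => h3; move/negP: h1; apply.
exact: lexle_trans h3.
Qed.

Lemma lexle_anti x y : lexle x y -> lexle y x -> x = y.
Proof.
case: x y => [x1 x2] [y1 y2]; rewrite /lexle /=.
case: (ltgtP x1 y1) => //= [->] h1 h2; congr pair; apply/eqP; rewrite eq_le h1 h2.
by [].
Qed.

Lemma lexle_total x y : lexle x y || lexle y x.
Proof. by case: (boolP (lexle y x)) => [h|]; rewrite ?h ?orbT // -lexltNle => /lexlt_le ->. Qed.

Lemma lexle_add x x' y y' : lexle x x' -> lexle y y' -> lexle (addp x y) (addp x' y').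
Proof.
case: x x' y y' => [x1 x2] [x1' x2'] [y1 y2] [y1' y2']; rewrite /lexle /addp /=.
case/orP=> [h|/andP[/eqP-> h]]; case/orP=> [h'|/andP[/eqP<- h']].
- by rewrite ltrD.
- by rewrite ltrD2r h.
- by rewrite ltrD2l h'.
- by rewrite eqxx lerD // orbT.
Qed.

Lemma lexlt_addl x x' y y' : lexlt x x' -> lexle y y' -> lexlt (addp x y) (addp x' y').
Proof.
case: x x' y y' => [x1 x2] [x1' x2'] [y1 y2] [y1' y2']; rewrite /lexlt /lexle /addp /=.
case/orP=> [h|/andP[/eqP-> h]]; case/orP=> [h'|/andP[/eqP<- h']].
- by rewrite ltrD.
- by rewrite ltrD2r h.
- by rewrite ltrD2l h'.
- by rewrite eqxx (ltr_leD h h') orbT.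
Qed.

Lemma lexle_addE x x' y y' : lexle x x' -> lexle y y' ->
  addp x y = addp x' y' -> x = x' /\ y = y'.
Proof.
move=> h1 h2 e.
have ex : x = x'.
  apply: lexle_anti h1 _; rewrite -[lexle _ _]negbK -lexltNle; apply/negP => h.
  by move: (lexlt_addl h h2); rewrite e lexltNle lexle_refl.
split=> //; subst x'; apply: lexle_anti h2 _; rewrite -[lexle _ _]negbK -lexltNle.
apply/negP=> h.
have : lexlt (addp y x) (addp y' x) by apply: lexlt_addl h (lexle_refl _).
by rewrite /addp [_ + x.1]addrC [_ + x.2]addrC [y'.1 + _]addrC [y'.2 + _]addrC -/(addp x y) e lexltNle lexle_refl.
Qed.

Section LM.
Variable key : int * nat -> rat * rat.

Lemma foldr_lexmax z (s : seq (int * nat)) :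
  let r := foldr (fun p q => if lexlt (key q) (key p) then p else q) z s in
  r \in z :: s /\ forall y, y \in z :: s -> lexle (key y) (key r).
Proof.
elim: s => [|a s [IH1 IH2]] /=.
  by split; [rewrite inE | move=> y; rewrite inE => /eqP ->; apply: lexle_refl].
set r := foldr _ _ _ in IH1 IH2 *.
case: ifP => h.
  split; first by rewrite !inE eqxx orbT.
  move=> y; rewrite !inE => /orP[/eqP->|/orP[/eqP->|ys]].
  - by apply: lexle_trans (lexlt_le h); apply: IH2; rewrite inE eqxx.
  - exact: lexle_refl.
  - by apply: lexle_trans (lexlt_le h); apply: IH2; rewrite inE ys orbT.
split.
  by move: IH1; rewrite !inE => /orP[->|->]; rewrite ?orbT.
move=> y; rewrite !inE => /orP[/eqP->|/orP[/eqP->|ys]].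
- by apply: IH2; rewrite inE eqxx.
- by move/negbT: h; rewrite lexltNle negbK.
- by apply: IH2; rewrite inE ys orbT.
Qed.

Lemma lexmaxP (s : seq (int * nat)) x0 : s != [::] ->
  lexmax key s x0 \in s /\ forall y, y \in s -> lexle (key y) (key (lexmax key s x0)).
Proof.
case: s => [//|a s] _; rewrite /lexmax /=.
have [h1 h2] := foldr_lexmax a (a :: s).
split.
  by move: h1; rewrite /= inE => /orP[/eqP->|//]; rewrite inE eqxx.
by move=> y ys; apply: h2; rewrite inE ys orbT.
Qed.

Lemma lexmax_uniq (s : seq (int * nat)) x0 m : injective key -> m \in s ->
  (forall y, y \in s -> lexle (key y) (key m)) -> lexmax key s x0 = m.
Proof.
move=> inj ms hm.
have ne : s != [::] by move: ms; case: (s).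
have [h1 h2] := lexmaxP x0 ne.
by apply: inj; apply: lexle_anti; [apply: hm | apply: h2].
Qed.
End LM.

Lemma fset_seq_ne (A : {fset int * nat}) : A != fset0 -> (A : seq _) != [::].
Proof.
apply: contra => /eqP h; apply/eqP/fsetP => x; rewrite inE.
by apply/negbTE; rewrite -[x \in A]/(x \in (A : seq _)) h.
Qed.

Lemma foldr_max (g : int * nat -> rat) z (s : seq (int * nat)) :
  let r := foldr (fun p m => Num.max (g p) m) z s in
  (z <= r) /\ (forall y, y \in s -> g y <= r) /\ (r = z \/ exists2 y, y \in s & g y = r).
Proof.
elim: s => [|a s [IH1 [IH2 IH3]]] /=; first by split=> //; split=> //; left.
set r := foldr _ _ _ in IH1 IH2 IH3 *.
split; first by rewrite le_max IH1 orbT.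
split.
  move=> y; rewrite inE => /orP[/eqP->|ys]; rewrite le_max; first by rewrite lexx.
  by rewrite (IH2 y ys) orbT.
case: (leP (g a) r) => h.
  by case: IH3 => [->|[y ys <-]]; [left|right; exists y; rewrite ?inE ?ys ?orbT].
by right; exists a; rewrite ?inE ?eqxx.
Qed.

Lemma vrsP (K : fieldType) rho sigma l (P : lpoly K) : Supp P != fset0 ->
  (forall y, y \in Supp P -> wt rho sigma l y <= vrs rho sigma l P) /\
  exists2 z, z \in Supp P & wt rho sigma l z = vrs rho sigma l P.
Proof.
move=> /fset_seq_ne ne; rewrite /vrs.
have [h1 [h2 h3]] := foldr_max (wt rho sigma l) (wt rho sigma l (head (0%R, 0%N) (Supp P))) (Supp P).
split=> //.
case: h3 => [->|//]; exists (head (0%R, 0%N) (Supp P)) => //.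
have : head (0%R, 0%N) (Supp P) \in (Supp P : seq _).
  by move: ne; case: (enum_fset (Supp P)) => //= a s _; rewrite inE eqxx.
by [].
Qed.

Section C.
Variable K : fieldType.
Variable l : nat.
Implicit Types P Q : lpoly K.

Definition gcoef P Q (c : int * nat -> int * nat -> nat -> K) x :=
  \sum_(p <- Supp P) \sum_(q <- Supp Q) \sum_(k < p.2.+1)
     (if x == mulW_key l p q k then P p * Q q * c p q k else 0).

Definition cW (p q : int * nat) (k : nat) : K :=
  ('C(p.2, k))%:R * ffact ((q.1)%:~R / (l%:R)) k.
Definition cL (p q : int * nat) (k : nat) : K := (k == 0)%:R.

Lemma cW0 p q : cW p q 0 = 1.
Proof. by rewrite /cW bin0 /ffact big_ord0 mulr1. Qed.
Lemma cL0 p q : cL p q 0 = 1.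
Proof. by []. Qed.

Lemma mulW_coef P Q x : mulW l P Q x = gcoef P Q cW x.
Proof.
rewrite /mulW fsfun_fun /gcoef; case: ifP => [_|xnin].
  apply: eq_bigr => p _; apply: eq_bigr => q _; apply: eq_bigr => k _.
  by rewrite /cW !mulrA.
symmetry; rewrite big_seq big1 // => p pP; rewrite big_seq big1 // => q qQ.
rewrite big1 // => k _; case: eqP => // ex; exfalso; move/negP: xnin; apply.
rewrite ex inE; apply/flatten_mapP; exists (p, q); first by apply: allpairs_f.
by apply: (map_f (fun k0 => mulW_key l p q k0)); rewrite mem_iota /= add0n ltn_ord.
Qed.

Lemma key0 p q : mulW_key l p q 0 = mulL_key p q.
Proof. by rewrite /mulW_key /mulL_key mul0n subr0 subn0. Qed.

Lemma mulL_coef P Q x : mulL P Q x = gcoef P Q cL x.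
Proof.
have e : \sum_(p <- Supp P) \sum_(q <- Supp Q) (if x == mulL_key p q then P p * Q q else 0)
   = gcoef P Q cL x.
  apply: eq_bigr => p _; apply: eq_bigr => q _.
  rewrite big_ord_recl /= key0 big1 ?addr0; first by rewrite /cL mulr1.
  by move=> k _; rewrite /cL /= mulr0; case: ifP.
rewrite /mulL fsfun_fun -e; case: ifP => // xnin.
symmetry; rewrite big_seq big1 // => p pP; rewrite big_seq big1 // => q qQ.
case: eqP => // ex; exfalso; move/negP: xnin; apply.
by rewrite ex inE /=; apply: allpairs_f.
Qed.
End C.

Lemma sum3_single (K : fieldType) (F : int * nat -> int * nat -> nat -> K)
   (sP sQ : seq (int * nat)) p0 q0 :
  uniq sP -> uniq sQ -> p0 \in sP -> q0 \in sQ ->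
  (forall p q (k : nat), p \in sP -> q \in sQ -> (k < p.2.+1)%N ->
      (p != p0) || (q != q0) || (k != 0%N) -> F p q k = 0) ->
  \sum_(p <- sP) \sum_(q <- sQ) \sum_(k < p.2.+1) F p q k = F p0 q0 0%N.
Proof.
move=> uP uQ p0P q0Q H.
rewrite (bigD1_seq p0) //= [X in _ + X]big1_seq ?addr0; last first.
  move=> p /andP[np pP]; rewrite big_seq big1 // => q qQ; rewrite big1 // => k _.
  by apply: H => //; rewrite np.
rewrite (bigD1_seq q0) //= [X in _ + X]big1_seq ?addr0; last first.
  move=> q /andP[nq qQ]; rewrite big1 // => k _.
  by apply: H => //; rewrite nq orbT.
rewrite big_ord_recl /= big1 ?addr0 // => k _.
apply: H => //; first by rewrite /bump add1n ltnS ltn_ord.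
by rewrite !eqxx /bump add1n.
Qed.

Section Lead.
Variable K : fieldType.
Variable l : nat.
Variable kap : int * nat -> rat * rat.
Hypothesis Hinj : injective kap.
Hypothesis H0 : forall p q, kap (mulW_key l p q 0) = addp (kap p) (kap q).
Hypothesis H1 : forall p q (k : nat), (0 < k)%N -> (k <= p.2)%N ->
  lexlt (kap (mulW_key l p q k)) (addp (kap p) (kap q)).
Variable c : int * nat -> int * nat -> nat -> K.
Hypothesis Hc : forall p q, c p q 0 = 1.

Lemma key_le p q (k : nat) : (k < p.2.+1)%N ->
  lexle (kap (mulW_key l p q k)) (addp (kap p) (kap q)).
Proof.
move=> hk; case: k hk => [|k] hk; first by rewrite H0 lexle_refl.
by apply: lexlt_le; apply: H1.
Qed.

Variables P Q : lpoly K.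
Hypothesis nP : Supp P != fset0.
Hypothesis nQ : Supp Q != fset0.
Let mP := lexmax kap (Supp P) (0%R, 0%N).
Let mQ := lexmax kap (Supp Q) (0%R, 0%N).

Lemma mP_in : mP \in Supp P /\ forall y, y \in Supp P -> lexle (kap y) (kap mP).
Proof. exact: (lexmaxP kap (0%R, 0%N) (fset_seq_ne nP)). Qed.
Lemma mQ_in : mQ \in Supp Q /\ forall y, y \in Supp Q -> lexle (kap y) (kap mQ).
Proof. exact: (lexmaxP kap (0%R, 0%N) (fset_seq_ne nQ)). Qed.

Lemma lead_coefE : gcoef l P Q c (mulW_key l mP mQ 0) = P mP * Q mQ.
Proof.
have [mPP hP] := mP_in; have [mQQ hQ] := mQ_in.
rewrite /gcoef (@sum3_single K (fun p q (k : nat) => if mulW_key l mP mQ 0 == mulW_key l p q k then P p * Q q * c p q k else 0) _ _ mP mQ) ?fset_uniq //; first by rewrite eqxx Hc mulr1.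
move=> p q k pP qQ hk hne; case: eqP => // /esym e.
exfalso.
have hle := key_le q hk.
have hpq : lexle (addp (kap p) (kap q)) (addp (kap mP) (kap mQ)) by apply: lexle_add; [apply: hP|apply: hQ].
case: k hk hne e hle => [|k] hk hne e hle.
  move: e => /(congr1 kap); rewrite !H0 => e.
  have [e1 e2] := lexle_addE (hP _ pP) (hQ _ qQ) e.
  by move: hne; rewrite (Hinj e1) (Hinj e2) !eqxx.
have := H1 q (ltn0Sn k) hk; rewrite e H0 => h.
by move: (lexlt_le_trans h hpq); rewrite lexltNle lexle_refl.
Qed.

Lemma lead_bound x : gcoef l P Q c x != 0 -> lexle (kap x) (addp (kap mP) (kap mQ)).
Proof.
have [mPP hP] := mP_in; have [mQQ hQ] := mQ_in.
apply: contraNT => hx; apply/eqP.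
rewrite /gcoef big_seq big1 // => p pP; rewrite big_seq big1 // => q qQ.
rewrite big1 // => k _; case: eqP => // ex; exfalso; move/negP: hx; apply.
rewrite ex; apply: lexle_trans (key_le q (ltn_ord k)) _.
by apply: lexle_add; [apply: hP|apply: hQ].
Qed.

Variable mul : lpoly K -> lpoly K -> lpoly K.
Hypothesis Hmul : forall P Q x, mul P Q x = gcoef l P Q c x.

Lemma lead_max : lexmax kap (Supp (mul P Q)) (0%R, 0%N) = mulW_key l mP mQ 0
   /\ mulW_key l mP mQ 0 \in Supp (mul P Q).
Proof.
have [mPP hP] := mP_in; have [mQQ hQ] := mQ_in.
have hin : mulW_key l mP mQ 0 \in Supp (mul P Q).
  rewrite /Supp mem_finsupp Hmul lead_coefE mulf_neq0 //.
  - by rewrite -mem_finsupp.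
  - by rewrite -mem_finsupp.
split=> //; apply: lexmax_uniq => // y; rewrite /Supp mem_finsupp Hmul => /lead_bound.
by rewrite H0.
Qed.
End Lead.

Section E.
Variable l : nat.
Hypothesis hl : (0 < l)%N.

Lemma l_neq0 : (l%:R : rat) != 0.
Proof. by rewrite pnatr_eq0 -lt0n. Qed.

Lemma expo_key p q (k : nat) : (k <= p.2)%N ->
  expo l (mulW_key l p q k) =
  ((expo l p).1 + (expo l q).1 - k%:R, (expo l p).2 + (expo l q).2 - k%:R).
Proof.
move=> hk; rewrite /expo /mulW_key /=; congr pair.
  rewrite rmorphB rmorphD /=.
  have -> : ((k * l)%N%:~R : rat) = (k * l)%N%:R by []. rewrite natrM.
  by field; apply: l_neq0.
by rewrite natrD natrB //; ring.
Qed.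

Lemma expo_inj : injective (expo l).
Proof.
move=> [a b] [a' b']; rewrite /expo /= => [[e1 e2]].
have ea : a = a'.
  move/(congr1 (fun x => x * l%:R)): e1; rewrite !divfK ?l_neq0 //.
  by move/eqP; rewrite eqr_int => /eqP.
by move/eqP: e2; rewrite eqr_nat => /eqP ->; rewrite ea.
Qed.
End E.

Section Keys.
Variable l : nat.
Hypothesis hl : (0 < l)%N.

Definition kw (p : int * nat) : rat * rat := ((expo l p).1 - (expo l p).2, (expo l p).1).
Definition kwb (p : int * nat) : rat * rat := ((expo l p).2 - (expo l p).1, (expo l p).2).

Lemma kw_inj : injective kw.
Proof.
move=> p q e; apply: (expo_inj hl); move: e; rewrite /kw.
case: (expo l p) => a b; case: (expo l q) => a' b' /= [e1 e2].
by congr pair; lra.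
Qed.

Lemma kwb_inj : injective kwb.
Proof.
move=> p q e; apply: (expo_inj hl); move: e; rewrite /kwb.
case: (expo l p) => a b; case: (expo l q) => a' b' /= [e1 e2].
by congr pair; lra.
Qed.

Lemma kw_H0 p q : kw (mulW_key l p q 0) = addp (kw p) (kw q).
Proof. rewrite /kw /addp expo_key //=; congr pair; ring. Qed.
Lemma kwb_H0 p q : kwb (mulW_key l p q 0) = addp (kwb p) (kwb q).
Proof. rewrite /kwb /addp expo_key //=; congr pair; ring. Qed.

Lemma kw_H1 p q (k : nat) : (0 < k)%N -> (k <= p.2)%N ->
  lexlt (kw (mulW_key l p q k)) (addp (kw p) (kw q)).
Proof.
move=> k0 hk; rewrite /kw /addp expo_key //= /lexlt /=.
have hk' : (0 : rat) < k%:R by rewrite ltr0n.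
apply/orP; right; apply/andP; split; first by apply/eqP; ring.
lra.
Qed.
Lemma kwb_H1 p q (k : nat) : (0 < k)%N -> (k <= p.2)%N ->
  lexlt (kwb (mulW_key l p q k)) (addp (kwb p) (kwb q)).
Proof.
move=> k0 hk; rewrite /kwb /addp expo_key //= /lexlt /=.
have hk' : (0 : rat) < k%:R by rewrite ltr0n.
apply/orP; right; apply/andP; split; first by apply/eqP; ring.
lra.
Qed.
End Keys.

Section KV.
Variable l : nat.
Hypothesis hl : (0 < l)%N.
Variables rho sigma : int.

Lemma wt_key p q (k : nat) : (k <= p.2)%N ->
  wt rho sigma l (mulW_key l p q k) =
  wt rho sigma l p + wt rho sigma l q - k%:R * (rho + sigma)%:~R.
Proof. by move=> hk; rewrite /wt expo_key //= rmorphD /=; ring. Qed.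

Hypothesis hrs : 0 <= rho + sigma.
Hypothesis hnz : ~~ ((rho == 0) && (sigma == 0)).

Definition kv (p : int * nat) : rat * rat :=
  (wt rho sigma l p, if sigma == 0 then (expo l p).2 else (expo l p).1).

Lemma kv_inj : injective kv.
Proof.
move=> p q e; apply: (expo_inj hl); move: e; rewrite /kv /wt.
case: (expo l p) => a b; case: (expo l q) => a' b' /= [e1 e2].
case: eqP e2 hnz => [s0|/eqP s0] e2 hnz'.
  subst b'; congr pair.
  have r0 : (rho%:~R : rat) != 0 by rewrite intr_eq0; move: hnz'; rewrite andbT.
  by apply: (mulfI r0); move: e1; rewrite s0 !mul0r !addr0.
subst a'; congr pair.
have r0 : (sigma%:~R : rat) != 0 by rewrite intr_eq0.
by apply: (mulfI r0); apply: (addrI (rho%:~R * a)).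
Qed.

Lemma kv_H0 p q : kv (mulW_key l p q 0) = addp (kv p) (kv q).
Proof.
rewrite /kv /addp wt_key // mul0r subr0 expo_key //; congr pair.
by case: ifP => _ /=; rewrite subr0.
Qed.

Lemma kv_H1 p q (k : nat) : (0 < k)%N -> (k <= p.2)%N ->
  lexlt (kv (mulW_key l p q k)) (addp (kv p) (kv q)).
Proof.
move=> k0 hk; rewrite /kv /addp wt_key // expo_key //= /lexlt /=.
have hk' : (0 : rat) < k%:R by rewrite ltr0n.
move: hrs; rewrite le_eqVlt => /orP[/eqP e|h].
  rewrite -e mulr0 subr0 eqxx /=.
  have s0 : sigma != 0.
    apply: contra hnz => /eqP s0; rewrite s0 eqxx andbT.
    by move/eqP: e; rewrite s0 addr0 eq_sym.
  by rewrite (negbTE s0) ltrBlDr ltrDl hk' orbT.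
have h' : (0 : rat) < (rho + sigma)%:~R by rewrite ltr0z.
by rewrite ltrBlDr ltrDl mulr_gt0.
Qed.
End KV.

Section Main.
Variable K : fieldType.
Variable l : nat.
Hypothesis hl : (0 < l)%N.

Lemma coef_exists (mul : lpoly K -> lpoly K -> lpoly K) :
  (mul = mulW l \/ mul = @mulL K) ->
  exists c, (forall p q, c p q 0%N = 1) /\ forall P Q x, mul P Q x = gcoef l P Q c x.
Proof.
case=> ->; first by exists (cW K l); split; [apply: cW0 | apply: mulW_coef].
by exists (@cL K); split; [apply: cL0 | move=> P Q x; apply: mulL_coef].
Qed.

Lemma part1 mul : (mul = mulW l \/ mul = @mulL K) ->
  forall P Q : lpoly K, Supp P != fset0 -> Supp Q != fset0 ->
    (w l (mul P Q) = padd (w l P) (w l Q)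
        /\ wbar l (mul P Q) = padd (wbar l P) (wbar l Q))
     /\ Supp (mul P Q) != fset0.
Proof.
move=> hm P Q nP nQ; have [c [Hc Hmul]] := coef_exists hm.
have [e1 i1] := lead_max (kw_inj hl) (kw_H0 hl) (kw_H1 hl) Hc nP nQ Hmul.
have [e2 _] := lead_max (kwb_inj hl) (kwb_H0 hl) (kwb_H1 hl) Hc nP nQ Hmul.
split; last by apply/eqP => e; move: i1; rewrite e inE.
split.
  by rewrite /w -/(kw l) e1 key0.
by rewrite /wbar -/(kwb l) e2 key0.
Qed.

Lemma vrs_kv rho sigma (X : lpoly K) : Supp X != fset0 ->
  vrs rho sigma l X = (kv l rho sigma (lexmax (kv l rho sigma) (Supp X) (0%R, 0%N))).1.
Proof.
move=> nX; have [hle [z zX ez]] := vrsP rho sigma l nX.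
have [mX hm] := lexmaxP (kv l rho sigma) (0%R, 0%N) (fset_seq_ne nX).
set m := lexmax _ _ _ in mX hm *.
rewrite /kv /=; apply/eqP; rewrite eq_le hle //=.
rewrite -ez; have := hm z zX; rewrite /kv /lexle /=. rewrite andbT => /orP[/ltW //|/andP[/eqP -> _]]; apply: lexx.
Qed.

Lemma gcd_nz rho sigma : inVbar rho sigma -> ~~ ((rho == 0) && (sigma == 0)).
Proof. by case/andP => g _; apply/negP => /andP[/eqP r /eqP s]; move: g; rewrite r s. Qed.

Lemma part3 mul : (mul = mulW l \/ mul = @mulL K) ->
  forall P Q : lpoly K, Supp P != fset0 -> Supp Q != fset0 ->
  forall rho sigma : int, inVbar rho sigma ->
          vrs rho sigma l (mul P Q) = (vrs rho sigma l P + vrs rho sigma l Q)%R.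
Proof.
move=> hm P Q nP nQ rho sigma hv; have [c [Hc Hmul]] := coef_exists hm.
have hrs : 0 <= rho + sigma by case/andP: hv.
have hnz := gcd_nz hv.
have [e1 i1] := lead_max (kv_inj hl hnz) (kv_H0 hl rho sigma) (kv_H1 hl hrs hnz) Hc nP nQ Hmul.
have nM : Supp (mul P Q) != fset0 by apply/eqP => e; move: i1; rewrite e inE.
by rewrite !vrs_kv // e1 kv_H0.
Qed.
End Main.

Section P2.
Variable K : fieldType.
Variable l : nat.
Hypothesis hl : (0 < l)%N.

Lemma ell_sub rho sigma (P : lpoly K) : (Supp (ell rho sigma l P) `<=` Supp P)%fset.
Proof.
apply/fsubsetP => x; rewrite !suppE ellE; case: ifP => //; by rewrite eqxx.
Qed.

Lemma part2 mul : (mul = mulW l \/ mul = @mulL K) ->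
  forall P Q : lpoly K, Supp P != fset0 -> Supp Q != fset0 ->
  forall rho sigma : int, inV rho sigma ->
    ell rho sigma l (mul P Q) = mulL (ell rho sigma l P) (ell rho sigma l Q).
Proof.
move=> hm P Q nP nQ rho sigma hv.
have hvb : inVbar rho sigma by case/andP: hv => g h; rewrite /inVbar g ltW.
have hrs : (0 : rat) < (rho + sigma)%:~R by rewrite ltr0z; case/andP: hv.
have ev := part3 hl hm nP nQ hvb.
have [c [Hc Hmul]] := coef_exists hm.
have [hP _] := vrsP rho sigma l nP; have [hQ _] := vrsP rho sigma l nQ.
set vP := vrs rho sigma l P in ev hP *; set vQ := vrs rho sigma l Q in ev hQ *.
apply/fsfunP => x; rewrite ellE (mulL_coef l) Hmul ev /gcoef.
rewrite (big_fset_incl _ (ell_sub rho sigma P)); last first.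
  move=> p _ pn; rewrite big1 // => q _; rewrite big1 // => k _.
  by rewrite (suppN pn) mul0r mul0r; case: ifP.
rewrite [RHS]big_seq [in RHS](eq_bigr (fun p => \sum_(q <- Supp Q) \sum_(k < p.2.+1)
  (if x == mulW_key l p q k then ell rho sigma l P p * ell rho sigma l Q q * cL K p q k else 0))); last first.
  move=> p _; rewrite (big_fset_incl _ (ell_sub rho sigma Q)) // => q _ qn.
  by rewrite big1 // => k _; rewrite (suppN qn) mulr0 mul0r; case: ifP.
case: eqP => hx.
  rewrite big_seq; apply: eq_bigr => p pP.
  rewrite big_seq [RHS]big_seq; apply: eq_bigr => q qQ.
  rewrite !big_ord_recl /=.
  have r1 : \sum_(k < p.2) (if x == mulW_key l p q (bump 0 k)
     then ell rho sigma l P p * ell rho sigma l Q q * cL K p q (bump 0 k) else 0) = 0.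
    by rewrite big1 // => k _; rewrite /cL /= mulr0; case: ifP.
  have r2 : \sum_(k < p.2) (if x == mulW_key l p q (bump 0 k)
     then P p * Q q * c p q (bump 0 k) else 0) = 0.
    rewrite big1 // => k _; case: eqP => // ex; exfalso.
    have hk : (bump 0 k <= p.2)%N by rewrite /bump add1n ltn_ord.
    have := wt_key hl rho sigma q hk; rewrite -ex hx.
    have := hP p pP; have := hQ q qQ.
    have : (0 : rat) < (bump 0 k)%:R by rewrite ltr0n /bump add1n.
    move=> h1 h2 h3 e.
    have : (0 : rat) < (bump 0 k)%:R * (rho + sigma)%:~R by apply: mulr_gt0.
    lra.
  rewrite r1 r2 !addr0.
  case: eqP => // ex.
  have e := wt_key hl rho sigma q (leq0n p.2); rewrite -ex hx mul0r subr0 in e.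
  have h2 := hP p pP; have h3 := hQ q qQ.
  have ep : wt rho sigma l p = vP by lra.
  have eq : wt rho sigma l q = vQ by lra.
  by rewrite !ellE ep eq !eqxx Hc cL0.
symmetry; rewrite big1 // => p _; rewrite big1 // => q _.
rewrite big1 // => k _; case: eqP => // ex.
case: k ex => [[|k] hk] ex /=; last by rewrite /cL /= mulr0.
rewrite !ellE.
case: eqP => ep; last by rewrite mul0r mul0r.
case: eqP => eq; last by rewrite mulr0 mul0r.
exfalso; apply: hx.
have := wt_key hl rho sigma q (leq0n p.2); rewrite -ex mul0r subr0 ep eq.
by [].
Qed.
End P2.

Unset Implicit Arguments.
Lemma ell_ne (K : fieldType) rho sigma l (P : lpoly K) :
  Supp P != fset0 -> Supp (ell rho sigma l P) != fset0.
Proof.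
move=> nP; have [_ [z zP ez]] := vrsP rho sigma l nP.
apply/eqP => e.
have : z \in Supp (ell rho sigma l P) by rewrite suppE ellE ez eqxx -suppE.
by rewrite e inE.
Qed.

Theorem proposition1p8 (K : fieldType) (hK : [pchar K] =i pred0)
    (l : nat) (hl : (0 < l)%N) :
  forall mul : lpoly K -> lpoly K -> lpoly K,
    (mul = mulW l \/ mul = @mulL K) ->
  forall P Q : lpoly K, Supp P != fset0 -> Supp Q != fset0 ->
    ((w l (mul P Q) = padd (w l P) (w l Q)
        /\ wbar l (mul P Q) = padd (wbar l P) (wbar l Q))
     /\ Supp (mul P Q) != fset0)
    /\ (forall rho sigma : int, inV rho sigma ->
          ell rho sigma l (mul P Q) = mulL (ell rho sigma l P) (ell rho sigma l Q))
    /\ (forall rho sigma : int, inVbar rho sigma ->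
          vrs rho sigma l (mul P Q) = (vrs rho sigma l P + vrs rho sigma l Q)%R)
    /\ (forall rho sigma : int, inV rho sigma ->
          st rho sigma l (mul P Q) = padd (st rho sigma l P) (st rho sigma l Q))
    /\ (forall rho sigma : int, inV rho sigma ->
          en rho sigma l (mul P Q) = padd (en rho sigma l P) (en rho sigma l Q)).
Proof.
move=> mul hm P Q nP nQ.
split; first by move: (part1 hl hm nP nQ).
split; first by move=> rho sigma hv; move: (part2 hl hm nP nQ hv).
split; first by move=> rho sigma hv; move: (part3 hl hm nP nQ hv).
have hL : (@mulL K = mulW l \/ @mulL K = @mulL K) by right.
split=> rho sigma hv; rewrite /st /en (part2 hl hm nP nQ hv);
  have [[h1 h2] _] := part1 hl hL (ell_ne _ rho sigma l _ nP) (ell_ne _ rho sigma l _ nQ) => //.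
Qed.
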